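(* Let $k_0>0$, $L>0$, $\mathbf n\in C^1([0,L],\mathbb{S}^2)$ and $\alpha\in C^1[0,L]$. Define $\mathbf e(t)=R_{\mathbf n(t),\alpha(t)}\mathbf e_3$ for $t\in[0,L]$, where $\mathbf e_3=(0,0,1)^\top$. Let $\mathbf y\in\mathbb{R}^3$ with $\|\mathbf y\|<\sqrt2\,k_0$, and let $t\in[0,L]$. Then there exist $k_1,k_2$ with $(k_1,k_2,t)\in\mathcal U$ and $T_+(k_1,k_2,t)=\mathbf y$ if and only if $$\mathbf y\cdot\mathbf e(t)=-\frac{\|\mathbf y\|^2}{2k_0}.$$ Moreover, $\operatorname{Card}(T_+^{-1}(\mathbf y))$ equals the number of solutions $t\in[0,L]$ of this equation.
   Context: $\mathbb{S}^2$ is the unit sphere in $\mathbb{R}^3$. For a unit vector $\mathbf n$ and angle $\alpha$, $R_{\mathbf n,\alpha}\mathbf y=(1-\cos\alpha)(\mathbf n\cdot\mathbf y)\mathbf n+\cos\alpha\,\mathbf y-\sin\alpha\,(\mathbf n\times\mathbf y)$. $\kappa=\kappa(k_1,k_2)=\sqrt{k_0^2-k_1^2-k_2^2}$. $\mathcal U=\{(k_1,k_2,t)\in\mathbb{R}^3:k_1^2+k_2^2<k_0^2,\ 0\le t\le L\}$, $T_+:\mathcal U\to\mathbb{R}^3$, $T_+(k_1,k_2,t)=R_{\mathbf n(t),\alpha(t)}(k_1,k_2,\kappa-k_0)^\top$, and $\operatorname{Card}(T_+^{-1}(\mathbf y))$ is the number of points of $\mathcal U$ mapped by $T_+$ to $\mathbf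 y$. *)

(* Defs.v *)
From Stdlib Require Import Reals Lra.
Open Scope R_scope.

Definition vec3 : Type := (R * R * R)%type.
Definition v3 (x y z : R) : vec3 := (x, y, z).
Definition vx (v : vec3) : R := fst (fst v).
Definition vy (v : vec3) : R := snd (fst v).
Definition vz (v : vec3) : R := snd v.

Definition dot (u v : vec3) : R := vx u * vx v + vy u * vy v + vz u * vz v.
Definition vnorm (u : vec3) : R := sqrt (dot u u).
Definition cross (u v : vec3) : vec3 :=
  v3 (vy u * vz v - vz u * vy v) (vz u * vx v - vx u * vz v) (vx u * vy v - vy u * vx v).
Definition vadd (u v : vec3) : vec3 := v3 (vx u + vx v) (vy u + vy v) (vz u + vz v).
Definition vscale (a : R) (u : vec3) : vec3 := v3 (a * vx u) (a * vy u) (a * vz u).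

Definition e3 : vec3 := v3 0 0 1.

Definition rot (n : vec3) (a : R) (y : vec3) : vec3 :=
  vadd (vadd (vscale ((1 - cos a) * dot n y) n) (vscale (cos a) y))
       (vscale (- sin a) (cross n y)).

Definition kappa (k0 k1 k2 : R) : R := sqrt (k0 ^ 2 - k1 ^ 2 - k2 ^ 2).

Definition inU (k0 L k1 k2 t : R) : Prop := k1 ^ 2 + k2 ^ 2 < k0 ^ 2 /\ 0 <= t <= L.

Definition Tplus (n : R -> vec3) (alpha : R -> R) (k0 k1 k2 t : R) : vec3 :=
  rot (n t) (alpha t) (v3 k1 k2 (kappa k0 k1 k2 - k0)).

Definition evec (n : R -> vec3) (alpha : R -> R) (t : R) : vec3 :=
  rot (n t) (alpha t) e3.

(* C^1 on the closed interval [a,b]: derivative (one-sided at the endpoints,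
   i.e. the difference quotient limit taken within [a,b]) exists at every point
   of [a,b] and is continuous on [a,b]. *)
Definition cont_on (f : R -> R) (a b : R) : Prop :=
  forall t, a <= t <= b -> forall eps, 0 < eps -> exists delta, 0 < delta /\
    forall s, a <= s <= b -> Rabs (s - t) < delta -> Rabs (f s - f t) < eps.

Definition has_deriv_on (f f' : R -> R) (a b : R) : Prop :=
  forall t, a <= t <= b -> forall eps, 0 < eps -> exists delta, 0 < delta /\
    forall s, a <= s <= b -> s <> t -> Rabs (s - t) < delta ->
      Rabs ((f s - f t) / (s - t) - f' t) < eps.

Definition C1_on (f : R -> R) (a b : R) : Prop :=
  exists f', has_deriv_on f f' a b /\ cont_on f' a b.

Definition C1_sphere (n : R -> vec3) (L : R) : Prop :=
  C1_on (fun t => vx (n t)) 0 L /\ C1_on (fun t => vy (n t)) 0 L /\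
  C1_on (fun t => vz (n t)) 0 L /\
  (forall t, 0 <= t <= L -> vnorm (n t) = 1).

(* Equality of cardinalities of two (possibly infinite) sets:
   existence of a bijection between the corresponding subtypes. *)
Definition same_card {A B : Type} (P : A -> Prop) (Q : B -> Prop) : Prop :=
  exists (f : {x : A | P x} -> {y : B | Q y}) (g : {y : B | Q y} -> {x : A | P x}),
    (forall x, g (f x) = x) /\ (forall y, f (g y) = y).

Definition Tplus_preimage (n : R -> vec3) (alpha : R -> R) (k0 L : R) (y : vec3)
  (p : vec3) : Prop :=
  inU k0 L (vx p) (vy p) (vz p) /\ Tplus n alpha k0 (vx p) (vy p) (vz p) = y.

(* Main.v *)
Require Import Defs.
From Stdlib Require Import Reals Lra.
Open Scope R_scope.

Ltac expand3 := unfold dot, rot, vadd, vscale, cross, v3, vx, vy, vz in *; simpl in *;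
  unfold dot, vx, vy, vz in *; simpl in *.

Ltac lc A B E1 E2 := match goal with |- ?L = ?R =>
  let H := fresh in assert (H : L - R = A * E1 + B * E2) by ring;
  match goal with H1 : E1 = 0, H2 : E2 = 0 |- _ => rewrite H1, H2 in H end; lra end.

Lemma rot_inv_gen (n u : vec3) (a b : R) : dot n n = 1 -> b = - a ->
  rot n b (rot n a u) = u.
Proof.
intros Hn ->. destruct n as [[n1 n2] n3]. destruct u as [[u1 u2] u3].
expand3.
rewrite cos_neg, sin_neg.
assert (Hcs : sin a ^2 + cos a ^2 - 1 = 0) by (pose proof (sin2_cos2 a); unfold Rsqr in *; lra).
assert (Hn' : n1 * n1 + n2 * n2 + n3 * n3 - 1 = 0) by lra.
set (c := cos a) in *. set (s := sin a) in *.
f_equal; [f_equal|].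
- lc (u1 - (n1*u1+n2*u2+n3*u3)*n1) ((1-c)^2*(n1*u1+n2*u2+n3*u3)*n1 + s^2*u1) (s^2+c^2-1) (n1 * n1 + n2 * n2 + n3 * n3 - 1).
- lc (u2 - (n1*u1+n2*u2+n3*u3)*n2) ((1-c)^2*(n1*u1+n2*u2+n3*u3)*n2 + s^2*u2) (s^2+c^2-1) (n1 * n1 + n2 * n2 + n3 * n3 - 1).
- lc (u3 - (n1*u1+n2*u2+n3*u3)*n3) ((1-c)^2*(n1*u1+n2*u2+n3*u3)*n3 + s^2*u3) (s^2+c^2-1) (n1 * n1 + n2 * n2 + n3 * n3 - 1).
Qed.

Lemma rot_dot (n u w : vec3) (a : R) : dot n n = 1 ->
  dot (rot n a u) (rot n a w) = dot u w.
Proof.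
intros Hn. destruct n as [[n1 n2] n3]. destruct u as [[u1 u2] u3].
destruct w as [[w1 w2] w3].
expand3.
assert (Hcs : sin a ^2 + cos a ^2 - 1 = 0) by (pose proof (sin2_cos2 a); unfold Rsqr in *; lra).
assert (Hn' : n1 * n1 + n2 * n2 + n3 * n3 - 1 = 0) by lra.
set (c := cos a) in *. set (s := sin a) in *.
lc ((u1*w1+u2*w2+u3*w3) - (n1*u1+n2*u2+n3*u3)*(n1*w1+n2*w2+n3*w3)) ((1-c)^2*(n1*u1+n2*u2+n3*u3)*(n1*w1+n2*w2+n3*w3) + s^2*(u1*w1+u2*w2+u3*w3)) (s^2+c^2-1) (n1 * n1 + n2 * n2 + n3 * n3 - 1).
Qed.

From Stdlib Require Import ProofIrrelevance.

Lemma dot_self_nonneg (v : vec3) : 0 <= dot v v.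
Proof. destruct v as [[a b] c]; unfold dot, vx, vy, vz; simpl; nra. Qed.

Lemma vnorm_sq (v : vec3) : vnorm v ^ 2 = dot v v.
Proof. unfold vnorm. simpl. rewrite Rmult_1_r. apply sqrt_sqrt, dot_self_nonneg. Qed.

Lemma unit_dot (v : vec3) : vnorm v = 1 -> dot v v = 1.
Proof. intro H. rewrite <- vnorm_sq, H. ring. Qed.

Lemma sig_eq {A : Type} (P : A -> Prop) (x1 x2 : A) (H1 : P x1) (H2 : P x2) :
  x1 = x2 -> exist P x1 H1 = exist P x2 H2.
Proof. intros ->. f_equal. apply proof_irrelevance. Qed.

Lemma fwd (N : vec3) a k0 k1 k2 y : 0 < k0 -> dot N N = 1 -> k1^2 + k2^2 < k0^2 ->
  rot N a (v3 k1 k2 (kappa k0 k1 k2 - k0)) = y ->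
  dot y (rot N a e3) = - (vnorm y ^ 2) / (2 * k0) /\
  rot N (-a) y = v3 k1 k2 (kappa k0 k1 k2 - k0).
Proof.
intros Hk HN Hin Hy. subst y. split.
- rewrite vnorm_sq, !rot_dot by exact HN.
  assert (Hk2 : kappa k0 k1 k2 * kappa k0 k1 k2 = k0^2 - k1^2 - k2^2)
    by (unfold kappa; apply sqrt_sqrt; lra).
  unfold dot, e3, v3, vx, vy, vz; simpl.
  field_simplify; [|lra]. replace (kappa k0 k1 k2 ^ 2) with (k0^2 - k1^2 - k2^2) by (rewrite <- Hk2; ring). field. lra.
- apply rot_inv_gen; auto.
Qed.

Lemma bwd (N : vec3) a k0 y : 0 < k0 -> dot N N = 1 -> vnorm y < sqrt 2 * k0 ->
  dot y (rot N a e3) = - (vnorm y ^ 2) / (2 * k0) ->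
  let w := rot N (-a) y in
  vx w ^ 2 + vy w ^ 2 < k0 ^ 2 /\
  rot N a (v3 (vx w) (vy w) (kappa k0 (vx w) (vy w) - k0)) = y.
Proof.
intros Hk HN Hny Heq w.
assert (Hy : rot N a w = y) by (apply rot_inv_gen; auto; ring).
assert (Hs : vnorm y ^ 2 < 2 * k0 ^ 2).
{ assert (0 <= vnorm y) by (unfold vnorm; apply sqrt_pos).
  assert (Hs2 : sqrt 2 * sqrt 2 = 2) by (apply sqrt_sqrt; lra).
  assert (0 <= sqrt 2) by apply sqrt_pos. nra. }
rewrite vnorm_sq, <- Hy in Heq, Hs.
rewrite (rot_dot N w e3 a HN), (rot_dot N w w a HN) in Heq. rewrite (rot_dot N w w a HN) in Hs.
clearbody w. destruct w as [[w1 w2] w3].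
unfold dot, e3, v3, vx, vy, vz in *; simpl in *.
assert (Hw3 : w3 * (2 * k0) = - (w1 * w1 + w2 * w2 + w3 * w3)).
{ assert (E : w3 = w1 * 0 + w2 * 0 + w3 * 1) by ring. rewrite E at 1. rewrite Heq. field. lra. }
assert (Hpos : 0 < k0 + w3) by nra.
assert (Hsq : k0 ^ 2 - w1 ^ 2 - w2 ^ 2 = (k0 + w3) ^ 2) by nra.
split; [nra|].
unfold kappa. rewrite Hsq, sqrt_pow2 by lra.
rewrite <- Hy. f_equal. f_equal. ring.
Qed.

Theorem proposition4p6 (k0 L : R) (n : R -> vec3) (alpha : R -> R) (y : vec3) :
  0 < k0 -> 0 < L ->
  C1_sphere n L -> C1_on alpha 0 L ->
  vnorm y < sqrt 2 * k0 ->
  (forall t, 0 <= t <= L ->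
     ((exists k1 k2, inU k0 L k1 k2 t /\ Tplus n alpha k0 k1 k2 t = y) <->
      dot y (evec n alpha t) = - (vnorm y ^ 2) / (2 * k0))) /\
  same_card (Tplus_preimage n alpha k0 L y)
            (fun t => 0 <= t <= L /\ dot y (evec n alpha t) = - (vnorm y ^ 2) / (2 * k0)).
Proof.
intros Hk HL [_ [_ [_ Hsph]]] _ Hny.
assert (HN : forall t, 0 <= t <= L -> dot (n t) (n t) = 1) by (intros; apply unit_dot; auto).
assert (Hf : forall p, Tplus_preimage n alpha k0 L y p ->
  0 <= vz p <= L /\ dot y (evec n alpha (vz p)) = - (vnorm y ^ 2) / (2 * k0)).
{ intros p [[Hin Ht] Hp]. split; [exact Ht|].
  exact (proj1 (fwd (n (vz p)) (alpha (vz p)) k0 (vx p) (vy p) y Hk (HN _ Ht) Hin Hp)). }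
set (w := fun t => rot (n t) (- alpha t) y).
assert (Hg : forall t, 0 <= t <= L /\ dot y (evec n alpha t) = - (vnorm y ^ 2) / (2 * k0) ->
  Tplus_preimage n alpha k0 L y (v3 (vx (w t)) (vy (w t)) t)).
{ intros t [Ht He]. destruct (bwd (n t) (alpha t) k0 y Hk (HN _ Ht) Hny He) as [H1 H2].
  split; [split; [exact H1 | exact Ht] | exact H2]. }
split.
- intros t Ht. split.
  + intros [k1 [k2 [[Hin _] Hp]]].
    exact (proj1 (fwd (n t) (alpha t) k0 k1 k2 y Hk (HN _ Ht) Hin Hp)).
  + intros He. exists (vx (w t)), (vy (w t)).
    destruct (Hg t (conj Ht He)) as [H1 H2]. split; [exact H1 | exact H2].
- exists (fun p => exist _ (vz (proj1_sig p)) (Hf _ (proj2_sig p))).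
  exists (fun t => exist _ _ (Hg _ (proj2_sig t))).
  split.
  + intros [p Hp]. apply sig_eq. simpl.
    destruct Hp as [[Hin Ht] Hp].
    pose proof (proj2 (fwd (n (vz p)) (alpha (vz p)) k0 (vx p) (vy p) y Hk (HN _ Ht) Hin Hp)) as E.
    unfold w. rewrite E. destruct p as [[p1 p2] p3]. reflexivity.
  + intros [t Ht]. apply sig_eq. reflexivity.
Qed.
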